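(* Let $G$ be a $P_5$-free graph and let $D=\{d_1,\dots,d_m\}\subseteq V(G)$. Define $X_1 := N(d_1)\setminus D$ and, for $i\in\{2,\dots,m\}$, $X_i := N(d_i)\setminus (X_1\cup\dots\cup X_{i-1}\cup D)$. Let $1\le i<j\le m$, let $I\subseteq X_i$ be an independent set in $G$, and let $P := N(I)\cap X_j$. Then there exists $I'\subseteq I$ with $|I'|\le 2$ such that every vertex of $P$ has a neighbor in $I'$.
   Context: $N(v)$ denotes the open neighborhood of $v$ in $G$ and $N(I)=\bigcup_{v\in I}N(v)$. A graph is $P_5$-free if it has no induced path on 5 vertices. *)

(* Defs.v *)
(* Simple graphs on a finType T given by a symmetric irreflexive relation. *)
From mathcomp Require Import all_boot.
Set Implicit Arguments. Unset Strict Implicit. Unset Printing Implicit Defensive.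

Section Graphs.
Variable T : finType.
Variable e : rel T.

Definition nbhd (v : T) : {set T} := [set u | e v u].
Definition nbhdS (I : {set T}) : {set T} := \bigcup_(v in I) nbhd v.

Definition independent (I : {set T}) : Prop :=
  forall u v, u \in I -> v \in I -> ~~ e u v.

Definition induced_P5 (f : 'I_5 -> T) : Prop :=
  injective f /\
  forall a b : 'I_5, e (f a) (f b) = ((a.+1 == b :> nat) || (b.+1 == a :> nat)).

Definition P5_free : Prop := forall f : 'I_5 -> T, ~ induced_P5 f.

(* D = {d_0, ..., d_{m-1}} (0-based indexing) *)
Variables (m : nat) (d : nat -> T).

Definition Dset : {set T} := [set d (val k) | k : 'I_m].

(* Xupto n = X_0 ∪ ... ∪ X_{n-1} *)
Fixpoint Xupto (n : nat) : {set T} :=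
  match n with
  | 0 => set0
  | k.+1 => Xupto k :|: (nbhd (d k) :\: (Xupto k :|: Dset))
  end.

Definition Xset (i : nat) : {set T} := nbhd (d i) :\: (Xupto i :|: Dset).

End Graphs.

(* Main.v *)
Require Import Defs.
From mathcomp Require Import all_boot.

Section Aux.
Variables (T : finType) (e : rel T).
Hypotheses (e_sym : symmetric e) (e_irr : irreflexive e).

Definition adj5 (a b : 'I_5) : bool := (a.+1 == b :> nat) || (b.+1 == a :> nat).

Lemma adj5_inj (a b : 'I_5) : (forall c, adj5 a c = adj5 b c) -> a = b.
Proof.
move=> H; apply: val_inj.
case: a b H => [[|[|[|[|[|a]]]]] Ha] [[|[|[|[|[|b]]]]] Hb] //= H;
 first [ by move: (H (@Ordinal 5 0 isT))
       | by move: (H (@Ordinal 5 1 isT))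
       | by move: (H (@Ordinal 5 2 isT))
       | by move: (H (@Ordinal 5 3 isT))
       | by move: (H (@Ordinal 5 4 isT)) ].
Qed.

Lemma P5_contra (v0 v1 v2 v3 v4 : T) :
  P5_free e ->
  e v0 v1 -> e v1 v2 -> e v2 v3 -> e v3 v4 ->
  ~~ e v0 v2 -> ~~ e v0 v3 -> ~~ e v0 v4 -> ~~ e v1 v3 -> ~~ e v1 v4 -> ~~ e v2 v4 ->
  False.
Proof.
move=> hP h01 h12 h23 h34 n02 n03 n04 n13 n14 n24.
pose f := fun k : 'I_5 => nth v0 [:: v0; v1; v2; v3; v4] k.
have h10 : e v1 v0 by rewrite e_sym.
have h21 : e v2 v1 by rewrite e_sym.
have h32 : e v3 v2 by rewrite e_sym.
have h43 : e v4 v3 by rewrite e_sym.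
have n20 : ~~ e v2 v0 by rewrite e_sym.
have n30 : ~~ e v3 v0 by rewrite e_sym.
have n40 : ~~ e v4 v0 by rewrite e_sym.
have n31 : ~~ e v3 v1 by rewrite e_sym.
have n41 : ~~ e v4 v1 by rewrite e_sym.
have n42 : ~~ e v4 v2 by rewrite e_sym.
have hE : forall a b : 'I_5, e (f a) (f b) = adj5 a b.
  move=> [[|[|[|[|[|a]]]]] Ha] [[|[|[|[|[|b]]]]] Hb] //=;
  rewrite /f /adj5 /= ?e_irr ?h01 ?h12 ?h23 ?h34 ?h10 ?h21 ?h32 ?h43
    ?(negbTE n02) ?(negbTE n03) ?(negbTE n04) ?(negbTE n13) ?(negbTE n14)
    ?(negbTE n24) ?(negbTE n20) ?(negbTE n30) ?(negbTE n40) ?(negbTE n31)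
    ?(negbTE n41) ?(negbTE n42) //.
apply: (hP f); split; last exact: hE.
move=> a b fab.
apply: adj5_inj => c.
by rewrite -!hE fab.
Qed.

Variables (m : nat) (d : nat -> T).

Lemma Xupto_sub k n : Xupto e m d n \subset Xupto e m d (k + n).
Proof.
elim: k => [|k IH] //=; apply: subset_trans IH _; exact: subsetUl.
Qed.

Lemma X_adj i x : x \in Xset e m d i -> e (d i) x.
Proof. by rewrite /Xset !inE => /andP [_]. Qed.

Lemma X_nadj i j x : i < j -> x \in Xset e m d j -> ~~ e (d i) x.
Proof.
move=> hij; rewrite /Xset !inE negb_or => /andP [/andP [nU nD] _].
apply/negP => hx.
have : x \in Xupto e m d i.+1.
  rewrite /= !inE negb_or nD /=.
  by case: (x \in Xupto e m d i); rewrite /nbhd ?inE ?hx.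
move/(subsetP (Xupto_sub (j - i.+1) i.+1)); rewrite subnK //.
by rewrite (negbTE nU).
Qed.

End Aux.

Theorem claim3p2 (T : finType) (e : rel T)
  (e_sym : symmetric e) (e_irr : irreflexive e)
  (hP5 : P5_free e)
  (m : nat) (d : nat -> T)
  (d_inj : {in [pred k | k < m] &, injective d})
  (i j : nat) (hij : i < j) (hjm : j < m)
  (I : {set T}) (hIX : I \subset Xset e m d i) (hIind : independent e I) :
  exists2 I' : {set T}, (I' \subset I) && (#|I'| <= 2) &
    forall p, p \in nbhdS e I :&: Xset e m d j ->
      exists2 a, a \in I' & e p a.
Proof.
set P := nbhdS e I :&: Xset e m d j.
pose S q := [set x in I | e q x].
have PX : forall q, q \in P -> q \in Xset e m d j by move=> q; rewrite inE => /andP [].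
have PS : forall q, q \in P -> exists2 a, a \in I & e q a.
  move=> q; rewrite inE => /andP [/bigcupP [a aI] qa _]; exists a => //.
  by rewrite e_sym; move: qa; rewrite /nbhd inE.
have IX : forall a, a \in I -> e (d i) a by move=> a /(subsetP hIX); apply: X_adj.
have PN : forall q, q \in P -> ~~ e (d i) q by move=> q /PX; apply: X_nadj.
have comp : forall q q' c, q \in P -> q' \in P -> c \in I -> ~~ e q c -> ~~ e q' c ->
    (S q \subset S q') || (S q' \subset S q).
  move=> q q' c qP q'P cI qc q'c.
  case: (boolP (S q \subset S q')) => //= /subsetPn [b]; rewrite !inE => /andP [bI qb].
  rewrite bI /= => q'b.
  apply/negPn/negP => /subsetPn [b']; rewrite !inE => /andP [b'I q'b'].
  rewrite b'I /= => qb'.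
  case: (boolP (e q q')) => qq'.
  - apply: (@P5_contra T e e_sym e_irr c (d i) b q q' hP5) => //.
    + by rewrite e_sym IX.
    + exact: IX.
    + by rewrite e_sym.
    + exact: hIind.
    + by rewrite e_sym.
    + by rewrite e_sym.
    + exact: PN.
    + exact: PN.
    + by rewrite e_sym.
  - apply: (@P5_contra T e e_sym e_irr q b (d i) b' q' hP5) => //.
    + by rewrite e_sym IX.
    + exact: IX.
    + by rewrite e_sym.
    + by rewrite e_sym PN.
    + exact: hIind.
    + by rewrite e_sym.
    + exact: PN.
case: (set_0Vmem P) => [P0 | [p0 p0P]].
  exists set0; first by rewrite sub0set cards0.
  by move=> p; rewrite -/P P0 inE.
have [a aI p0a] := PS p0 p0P.
pose P' := [set q in P | ~~ e q a].
case: (set_0Vmem P') => [P'0 | [q1 q1P']].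
  exists [set a]; first by rewrite sub1set aI cards1.
  move=> p pP; exists a; rewrite ?inE //.
  apply/negPn/negP => pa.
  have : p \in P' by rewrite inE pP pa.
  by rewrite P'0 inE.
have [q0 q0P' q0min] := arg_minnP (fun q => #|S q|) q1P'.
have : q0 \in P' := q0P'.
rewrite inE => /andP [q0P q0a].
have [b bI q0b] := PS q0 q0P.
exists [set a; b].
  by rewrite subUset !sub1set aI bI cards2; case: (a != b).
move=> p pP; case: (boolP (e p a)) => pa.
  by exists a; rewrite ?inE ?eqxx.
exists b; first by rewrite !inE eqxx orbT.
have pP' : p \in P' by rewrite inE -/P pP pa.
have hmin := q0min p pP'.
have bS : b \in S q0 by rewrite inE bI q0b.
case/orP: (comp q0 p a q0P pP aI q0a pa) => [/subsetP H | sub].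
  by move: (H b bS); rewrite inE => /andP [].
have : S p == S q0 by rewrite eqEcard sub hmin.
by move/eqP => E; move: bS; rewrite -E inE => /andP [].
Qed.
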